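(* There exist a convex semialgebraic function $h:\mathbb{R}^2\to\mathbb{R}$ of class $C^1$ with $1$-Lipschitz gradient and a constant $\rho\in(0,1)$ such that $\|x-\nabla h(x)\|\le\rho\|x\|$ for all $x\in\mathbb{R}^2$, while $h$ is not strongly convex on any neighborhood of $0$ and the Clarke Jacobian $\mathrm{Jac}^c_{\nabla h}(0)$ contains a singular matrix.
   Context: Clarke Jacobian: for a locally Lipschitz $F:\mathbb{R}^N\to\mathbb{R}^m$, $\mathrm{Jac}^c_F(z)=\mathrm{conv}\{\lim_k \mathrm{Jac}_F(z_k): z_k\to z,\ F \text{ differentiable at } z_k\}$. A function is semialgebraic if its graph is a finite union of sets defined by finitely many polynomial equalities and inequalities. *)

(* Defs.v *)
From Stdlib Require Import Reals Lra List.
Open Scope R_scope.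

Definition R2 : Type := (R * R)%type.
Definition vadd (x y : R2) : R2 := (fst x + fst y, snd x + snd y).
Definition vsub (x y : R2) : R2 := (fst x - fst y, snd x - snd y).
Definition vscal (a : R) (x : R2) : R2 := (a * fst x, a * snd x).
Definition dot (x y : R2) : R := fst x * fst y + snd x * snd y.
Definition norm (x : R2) : R := sqrt (dot x x).
Definition origin : R2 := (0, 0).

Record Mat2 : Type := mkMat2 { m11 : R; m12 : R; m21 : R; m22 : R }.
Definition mat_apply (M : Mat2) (v : R2) : R2 :=
  (m11 M * fst v + m12 M * snd v, m21 M * fst v + m22 M * snd v).
Definition det (M : Mat2) : R := m11 M * m22 M - m12 M * m21 M.
Definition singular (M : Mat2) : Prop := det M = 0.
Definition mat_scal (a : R) (M : Mat2) : Mat2 :=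
  mkMat2 (a * m11 M) (a * m12 M) (a * m21 M) (a * m22 M).
Definition mat_add (M N : Mat2) : Mat2 :=
  mkMat2 (m11 M + m11 N) (m12 M + m12 N) (m21 M + m21 N) (m22 M + m22 N).
Definition mat_zero : Mat2 := mkMat2 0 0 0 0.

(** Semialgebraic functions R^2 -> R: the graph {(x1,x2,y) | y = h(x1,x2)}
    is a finite union of sets defined by finitely many polynomial
    equalities (p = 0) and strict inequalities (q > 0) in 3 variables. *)
Inductive poly3 : Type :=
  | PVar : nat -> poly3          (* variable 0 = x1, 1 = x2, 2 = y *)
  | PConst : R -> poly3
  | PAdd : poly3 -> poly3 -> poly3
  | PMul : poly3 -> poly3 -> poly3.

Fixpoint peval (p : poly3) (x1 x2 y : R) : R :=
  match p with
  | PVar 0 => x1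
  | PVar 1 => x2
  | PVar 2 => y
  | PVar _ => 0
  | PConst c => c
  | PAdd p q => peval p x1 x2 y + peval q x1 x2 y
  | PMul p q => peval p x1 x2 y * peval q x1 x2 y
  end.

Definition basic_holds (B : list poly3 * list poly3) (x1 x2 y : R) : Prop :=
  Forall (fun p => peval p x1 x2 y = 0) (fst B) /\
  Forall (fun q => peval q x1 x2 y > 0) (snd B).

Definition semialgebraic_fun (h : R2 -> R) : Prop :=
  exists L : list (list poly3 * list poly3),
    forall x1 x2 y : R,
      y = h (x1, x2) <-> Exists (fun B => basic_holds B x1 x2 y) L.

Definition convex_fun (h : R2 -> R) : Prop :=
  forall x y t, 0 <= t <= 1 ->
    h (vadd (vscal t x) (vscal (1 - t) y)) <= t * h x + (1 - t) * h y.

Definition in_ball (c : R2) (r : R) (x : R2) : Prop := norm (vsub x c) < r.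

Definition strongly_convex_on (h : R2 -> R) (U : R2 -> Prop) : Prop :=
  exists mu, mu > 0 /\
    forall x y t, U x -> U y -> 0 <= t <= 1 ->
      h (vadd (vscal t x) (vscal (1 - t) y))
        <= t * h x + (1 - t) * h y - mu / 2 * t * (1 - t) * (norm (vsub x y))^2.

Definition has_gradient (h : R2 -> R) (x g : R2) : Prop :=
  forall eps, eps > 0 -> exists delta, delta > 0 /\
    forall v, norm v < delta ->
      Rabs (h (vadd x v) - h x - dot g v) <= eps * norm v.

Definition has_jacobian (F : R2 -> R2) (z : R2) (J : Mat2) : Prop :=
  forall eps, eps > 0 -> exists delta, delta > 0 /\
    forall v, norm v < delta ->
      norm (vsub (vsub (F (vadd z v)) (F z)) (mat_apply J v)) <= eps * norm v.

Definition continuous2 (F : R2 -> R2) : Prop :=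
  forall x eps, eps > 0 -> exists delta, delta > 0 /\
    forall y, norm (vsub y x) < delta -> norm (vsub (F y) (F x)) < eps.

Definition limiting_jacobian (F : R2 -> R2) (z : R2) (M : Mat2) : Prop :=
  exists (zk : nat -> R2) (Jk : nat -> Mat2),
    Un_cv (fun k => fst (zk k)) (fst z) /\ Un_cv (fun k => snd (zk k)) (snd z) /\
    (forall k, has_jacobian F (zk k) (Jk k)) /\
    Un_cv (fun k => m11 (Jk k)) (m11 M) /\ Un_cv (fun k => m12 (Jk k)) (m12 M) /\
    Un_cv (fun k => m21 (Jk k)) (m21 M) /\ Un_cv (fun k => m22 (Jk k)) (m22 M).

Definition conv_hull (S : Mat2 -> Prop) (M : Mat2) : Prop :=
  exists l : list (R * Mat2),
    Forall (fun p => 0 <= fst p /\ S (snd p)) l /\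
    fold_right (fun p s => fst p + s) 0 l = 1 /\
    M = fold_right (fun p A => mat_add (mat_scal (fst p) (snd p)) A) mat_zero l.

Definition clarke_jacobian (F : R2 -> R2) (z : R2) (M : Mat2) : Prop :=
  conv_hull (limiting_jacobian F z) M.

(* Main.v *)
Require Import Defs.
From Stdlib Require Import Reals Lra Psatz List.
Import ListNotations.
Open Scope R_scope.

Definition Gf (x : R2) : R2 :=
  if Rle_dec (fst x + 2 * Rabs (snd x)) 0 then (fst x / 2, 0)
  else if Rle_dec (Rabs (snd x)) (fst x) then (fst x, snd x)
  else if Rle_dec 0 (snd x) then ((2 * fst x + snd x) / 3, (fst x + 2 * snd x) / 3)
  else ((2 * fst x - snd x) / 3, (2 * snd x - fst x) / 3).

Definition hf (x : R2) : R :=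
  if Rle_dec (fst x + 2 * Rabs (snd x)) 0 then fst x ^ 2 / 4
  else if Rle_dec (Rabs (snd x)) (fst x) then (fst x ^ 2 + snd x ^ 2) / 2
  else if Rle_dec 0 (snd x) then (fst x ^ 2 + snd x ^ 2) / 2 - (snd x - fst x) ^ 2 / 6
  else (fst x ^ 2 + snd x ^ 2) / 2 - (snd x + fst x) ^ 2 / 6.

Definition ff (q : R2) : R := / 2 * (Rmax (Rabs (snd q) - fst q) 0) ^ 2.
Definition sf (x : R2) : R2 := vsub x (Gf x).

Ltac elim_abs :=
  repeat match goal with
  | |- context [Rabs ?t] =>
      let H := fresh "Ha" in destruct (Rle_lt_dec 0 t) as [H|H];
      [rewrite (Rabs_pos_eq t H) in * | rewrite (Rabs_left t H) in *]
  | H0 : context [Rabs ?t] |- _ =>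
      let H := fresh "Ha" in destruct (Rle_lt_dec 0 t) as [H|H];
      [rewrite (Rabs_pos_eq t H) in * | rewrite (Rabs_left t H) in *]
  end.

Ltac elim_max :=
  repeat match goal with
  | |- context [Rmax ?a ?b] =>
      let H := fresh "Hm" in destruct (Rle_lt_dec a b) as [H|H];
      [rewrite (Rmax_right a b H) in * | rewrite (Rmax_left a b (Rlt_le _ _ H)) in *]
  end.

Lemma ff_ge : forall t L q, 0 <= t -> L <= Rabs (snd q) - fst q ->
  t * L - t ^ 2 / 2 <= ff q.
Proof.
  intros t L q Ht HL. unfold ff.
  set (z := Rabs (snd q) - fst q) in *.
  pose proof (pow2_ge_0 (z - t)); pose proof (pow2_ge_0 t); elim_max; nra.
Qed.

Lemma hf_env : forall x, hf x = dot x x / 2 - ff (Gf x) - dot (sf x) (sf x) / 2.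
Proof.
  intros [a b]. unfold hf, sf, ff, Gf, dot, vsub; simpl.
  destruct (Rle_dec (a + 2 * Rabs b) 0); simpl.
  - elim_abs; elim_max; field_simplify; nra.
  - destruct (Rle_dec (Rabs b) a); simpl.
    + elim_abs; elim_max; nra.
    + destruct (Rle_dec 0 b); simpl; elim_abs; elim_max; nra.
Qed.

Lemma SUB : forall x q, ff (Gf x) + dot (sf x) (vsub q (Gf x)) <= ff q.
Proof.
  intros [a b] [q1 q2]. unfold sf, Gf, dot, vsub; simpl.
  destruct (Rle_dec (a + 2 * Rabs b) 0); simpl.
  - assert (Hb : Rabs b <= - a / 2) by lra.
    assert (Hq : b * q2 <= (- a / 2) * Rabs q2).
    { assert (b * q2 <= Rabs b * Rabs q2). { rewrite <- Rabs_mult. apply Rle_abs. }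
      assert (0 <= Rabs q2) by apply Rabs_pos. nra. }
    pose proof (ff_ge (- a / 2) (Rabs q2 - q1) (q1, q2)) as Hf; simpl in Hf.
    assert (0 <= Rabs b) by apply Rabs_pos.
    unfold ff at 1; simpl. rewrite Rabs_R0.
    rewrite Rmax_left by lra.
    specialize (Hf ltac:(lra) ltac:(lra)). nra.
  - destruct (Rle_dec (Rabs b) a); simpl.
    + unfold ff at 1; simpl. rewrite Rmax_right by lra.
      unfold ff. assert (0 <= (Rmax (Rabs q2 - q1) 0)^2) by (apply pow2_ge_0). nra.
    + destruct (Rle_dec 0 b); simpl.
      * rewrite Rabs_pos_eq in n, n0 by lra.
        pose proof (ff_ge ((b - a) / 3) (q2 - q1) (q1, q2)) as Hf; simpl in Hf.
        specialize (Hf ltac:(lra) ltac:(pose proof (Rle_abs q2); lra)).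
        unfold ff at 1; simpl. rewrite Rabs_pos_eq by lra. rewrite Rmax_left by lra.
        nra.
      * rewrite Rabs_left in n, n0 by lra.
        pose proof (ff_ge ((- b - a) / 3) (- q2 - q1) (q1, q2)) as Hf; simpl in Hf.
        specialize (Hf ltac:(lra) ltac:(pose proof (Rle_abs (- q2)); rewrite Rabs_Ropp in *; lra)).
        unfold ff at 1; simpl. rewrite Rabs_left by lra. rewrite Rmax_left by lra.
        nra.
Qed.

Lemma LB : forall x y, hf x + dot (Gf x) (vsub y x) <= hf y.
Proof.
  intros x y. pose proof (SUB y (Gf x)) as H. rewrite !hf_env. unfold sf in *.
  destruct (Gf x) as [g1 g2], (Gf y) as [k1 k2], x as [a b], y as [c d].
  unfold dot, vsub in *; simpl in *.
  pose proof (pow2_ge_0 (k1 - g1)); pose proof (pow2_ge_0 (k2 - g2)). nra.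
Qed.

Lemma UB : forall x y, hf y <= hf x + dot (Gf x) (vsub y x) + dot (vsub y x) (vsub y x) / 2.
Proof.
  intros x y. pose proof (SUB x (Gf y)) as H. rewrite !hf_env. unfold sf in *.
  destruct (Gf x) as [g1 g2], (Gf y) as [k1 k2], x as [a b], y as [c d].
  unfold dot, vsub in *; simpl in *.
  pose proof (pow2_ge_0 (c - k1 - (a - g1))); pose proof (pow2_ge_0 (d - k2 - (b - g2))). nra.
Qed.

Lemma LIPsq : forall x y, dot (vsub (Gf x) (Gf y)) (vsub (Gf x) (Gf y)) <= dot (vsub x y) (vsub x y).
Proof.
  intros x y. pose proof (SUB x (Gf y)) as H1. pose proof (SUB y (Gf x)) as H2.
  unfold sf in *.
  destruct (Gf x) as [g1 g2], (Gf y) as [k1 k2], x as [a b], y as [c d].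
  unfold dot, vsub in *; simpl in *.
  pose proof (pow2_ge_0 (a - g1 - (c - k1))); pose proof (pow2_ge_0 (b - g2 - (d - k2))). nra.
Qed.

Lemma dot_ge0 : forall v, 0 <= dot v v.
Proof. intros [a b]; unfold dot; simpl; nra. Qed.

Lemma norm_sq : forall v, norm v ^ 2 = dot v v.
Proof. intros v; unfold norm; rewrite pow2_sqrt; [reflexivity| apply dot_ge0]. Qed.

Lemma norm_ge0 : forall v, 0 <= norm v.
Proof. intros; unfold norm; apply sqrt_pos. Qed.

Lemma LIP : forall x y, norm (vsub (Gf x) (Gf y)) <= norm (vsub x y).
Proof. intros; unfold norm; apply sqrt_le_1_alt; apply LIPsq. Qed.

Lemma RHO : forall x, norm (vsub x (Gf x)) <= 2/3 * norm x.
Proof.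
  intros x. unfold norm.
  replace (2/3) with (sqrt ((2/3)^2)) by (rewrite sqrt_pow2; lra).
  rewrite <- sqrt_mult by (try apply dot_ge0; nra).
  apply sqrt_le_1_alt.
  destruct x as [a b]. unfold Gf, dot, vsub; simpl.
  destruct (Rle_dec (a + 2 * Rabs b) 0); simpl.
  - assert (b * b <= a * a / 4).
    { pose proof (Rabs_pos b).
      assert (E : b * b = Rabs b * Rabs b) by (rewrite <- Rabs_mult; symmetry; apply Rabs_pos_eq; nra).
      assert (0 <= -a/2 - Rabs b) by lra. assert (0 <= -a/2 + Rabs b) by lra. nra. }
    nra.
  - destruct (Rle_dec (Rabs b) a); simpl.
    + nra.
    + pose proof (pow2_ge_0 (a+b)); pose proof (pow2_ge_0 (a-b)).
      destruct (Rle_dec 0 b); simpl; nra.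
Qed.

Lemma CONV : convex_fun hf.
Proof.
  intros x y t Ht. set (z := vadd (vscal t x) (vscal (1 - t) y)).
  pose proof (LB z x) as H1. pose proof (LB z y) as H2.
  assert (E : t * dot (Gf z) (vsub x z) + (1 - t) * dot (Gf z) (vsub y z) = 0).
  { unfold z; destruct (Gf _) as [g1 g2]; destruct x, y; unfold dot, vsub, vadd, vscal; simpl; ring. }
  nra.
Qed.

Lemma vsub_vadd : forall x v, vsub (vadd x v) x = v.
Proof. intros [a b] [c d]; unfold vsub, vadd; simpl; f_equal; ring. Qed.

Lemma GRAD : forall x, has_gradient hf x (Gf x).
Proof.
  intros x eps He. exists eps. split; [exact He|]. intros v Hv.
  pose proof (LB x (vadd x v)) as H1. pose proof (UB x (vadd x v)) as H2.
  rewrite vsub_vadd in H1, H2. rewrite <- norm_sq in H2.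
  pose proof (norm_ge0 v).
  apply Rabs_le. split; nra.
Qed.

Lemma CONT : continuous2 Gf.
Proof.
  intros x eps He. exists eps. split; [exact He|]. intros y Hy.
  pose proof (LIP y x). lra.
Qed.

Lemma hf_C : forall a b, a + 2 * Rabs b <= 0 -> hf (a, b) = a ^ 2 / 4.
Proof. intros a b H. unfold hf; simpl. destruct (Rle_dec _ _); [reflexivity|contradiction]. Qed.

Lemma Gf_C : forall a b, a + 2 * Rabs b <= 0 -> Gf (a, b) = (a / 2, 0).
Proof. intros a b H. unfold Gf; simpl. destruct (Rle_dec _ _); [reflexivity|contradiction]. Qed.

Lemma NSC : forall r, r > 0 -> ~ strongly_convex_on hf (in_ball origin r).
Proof.
  intros r Hr [mu [Hmu Hsc]].
  set (a := r / 2).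
  assert (Ha : 0 < a) by (unfold a; lra).
  assert (Hin : forall c, Rabs c <= a / 4 -> in_ball origin r (- a, c)).
  { intros c Hc. unfold in_ball, norm, vsub, origin, dot; simpl.
    rewrite <- (sqrt_pow2 r) by lra. apply sqrt_lt_1_alt.
    assert (c * c <= a / 4 * (a / 4)).
    { pose proof (Rabs_pos c).
      assert (E : c * c = Rabs c * Rabs c) by (rewrite <- Rabs_mult; symmetry; apply Rabs_pos_eq; nra).
      rewrite E. apply Rmult_le_compat; lra. }
    split; [nra|]. unfold a in *. nra. }
  specialize (Hsc (- a, a / 4) (- a, - (a / 4)) (1/2)
                (Hin (a/4) ltac:(rewrite Rabs_pos_eq; lra))
                (Hin (-(a/4)) ltac:(rewrite Rabs_Ropp, Rabs_pos_eq; lra)) ltac:(lra)).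
  replace (vadd (vscal (1/2) (- a, a / 4)) (vscal (1 - 1/2) (- a, - (a / 4)))) with ((- a, 0) : R2) in Hsc
    by (unfold vadd, vscal; simpl; f_equal; field).
  rewrite !hf_C in Hsc by (try rewrite Rabs_R0; try rewrite Rabs_Ropp; try rewrite Rabs_pos_eq; lra).
  rewrite norm_sq in Hsc. unfold dot, vsub in Hsc; simpl in Hsc.
  assert (0 < mu * (a * a)) by (apply Rmult_lt_0_compat; nra). nra.
Qed.

Definition Mz : Mat2 := mkMat2 (1/2) 0 0 0.

Lemma abs1_le : forall v, Rabs (fst v) <= norm v.
Proof. intros [a b]; unfold norm, dot; simpl. rewrite <- sqrt_Rsqr_abs. apply sqrt_le_1_alt. unfold Rsqr; nra. Qed.
Lemma abs2_le : forall v, Rabs (snd v) <= norm v.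
Proof. intros [a b]; unfold norm, dot; simpl. rewrite <- sqrt_Rsqr_abs. apply sqrt_le_1_alt. unfold Rsqr; nra. Qed.

Lemma JAC : forall a, a < 0 -> has_jacobian Gf (a, 0) Mz.
Proof.
  intros a Ha eps He. exists (- a / 3). split; [lra|]. intros [v1 v2] Hv.
  pose proof (abs1_le (v1, v2)) as H1. pose proof (abs2_le (v1, v2)) as H2. simpl in H1, H2.
  pose proof (Rle_abs v1). pose proof (Rle_abs (- v1)). rewrite Rabs_Ropp in *.
  unfold vadd; simpl.
  rewrite Gf_C by (rewrite Rplus_0_l; lra).
  rewrite Gf_C by (rewrite Rabs_R0; lra).
  replace (vsub (vsub ((a + v1) / 2, 0) (a / 2, 0)) (mat_apply Mz (v1, v2))) with ((0, 0) : R2)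
    by (unfold vsub, mat_apply, Mz; simpl; f_equal; field).
  unfold norm at 1, dot; simpl. replace (0 * 0 + 0 * 0) with 0 by ring. rewrite sqrt_0.
  pose proof (norm_ge0 (v1, v2)). nra.
Qed.

Lemma cv_const : forall c, Un_cv (fun _ => c) c.
Proof. intros c eps He. exists 0%nat. intros n _. unfold Rdist. rewrite Rminus_diag, Rabs_R0. lra. Qed.

Lemma cv_inv : Un_cv (fun k => - / INR (S k)) 0.
Proof.
  intros eps He. destruct (archimed_cor1 eps He) as [N [H1 H2]]. exists N. intros n Hn.
  unfold Rdist. rewrite Rminus_0_r, Rabs_Ropp.
  assert (0 < INR N) by (apply lt_0_INR; lia).
  assert (INR N <= INR (S n)) by (apply le_INR; lia).
  rewrite Rabs_pos_eq by (left; apply Rinv_0_lt_compat; lra).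
  pose proof (Rinv_le_contravar _ _ H H0). lra.
Qed.

Lemma CLARKE : exists M, clarke_jacobian Gf origin M /\ singular M.
Proof.
  exists Mz. split.
  - exists [(1, Mz)]. split; [|split].
    + constructor; [|constructor]. simpl. split; [lra|].
      exists (fun k => (- / INR (S k), 0)), (fun _ => Mz).
      unfold origin; cbn [fst snd]. split; [exact cv_inv|]. split; [apply cv_const|].
      split; [|repeat split; apply cv_const].
      intros k. apply JAC. assert (0 < / INR (S k)) by (apply Rinv_0_lt_compat, lt_0_INR; lia). lra.
    + simpl; ring.
    + unfold mat_add, mat_scal, Mz, mat_zero; simpl; f_equal; ring.
  - unfold singular, det, Mz; simpl; ring.
Qed.

Definition PX := PVar 0.
Definition PY := PVar 1.
Definition PZ := PVar 2.
Definition Psub p q := PAdd p (PMul (PConst (-1)) q).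
Definition Psc c p := PMul (PConst c) p.

Definition sq2 := PAdd (PMul PX PX) (PMul PY PY).
Definition eA := Psub PZ (Psc (1/2) sq2).
Definition eBp := Psub PZ (Psub (Psc (1/2) sq2) (Psc (1/6) (PMul (Psub PY PX) (Psub PY PX)))).
Definition eBm := Psub PZ (Psub (Psc (1/2) sq2) (Psc (1/6) (PMul (PAdd PY PX) (PAdd PY PX)))).
Definition eC := Psub PZ (Psc (1/4) (PMul PX PX)).

Definition sets (e g1 g2 : poly3) : list (list poly3 * list poly3) :=
  [([e], [g1; g2]); ([e; g1], [g2]); ([e; g2], [g1]); ([e; g1; g2], [])].

Definition Lsa : list (list poly3 * list poly3) :=
  sets eA (Psub PX PY) (PAdd PX PY) ++
  sets eBp (Psub PY PX) (PAdd PX (Psc 2 PY)) ++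
  sets eBm (Psub (Psc (-1) PX) PY) (Psub PX (Psc 2 PY)) ++
  sets eC (Psub (Psc (-1) PX) (Psc 2 PY)) (PAdd (Psc (-1) PX) (Psc 2 PY)).

Lemma sets_spec : forall e g1 g2 x1 x2 y,
  Exists (fun B => basic_holds B x1 x2 y) (sets e g1 g2) <->
  peval e x1 x2 y = 0 /\ peval g1 x1 x2 y >= 0 /\ peval g2 x1 x2 y >= 0.
Proof.
  intros. unfold sets, basic_holds. rewrite !Exists_cons, Exists_nil. simpl.
  rewrite !Forall_cons_iff, !Forall_nil_iff.
  generalize (peval e x1 x2 y) (peval g1 x1 x2 y) (peval g2 x1 x2 y). intros a b c.
  split.
  - intros H. repeat destruct H as [H|H]; try tauto; lra.
  - intros [Ha [Hb Hc]].
    destruct (Rle_lt_or_eq_dec 0 b (Rge_le _ _ Hb)) as [Hb'|Hb'];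
    destruct (Rle_lt_or_eq_dec 0 c (Rge_le _ _ Hc)) as [Hc'|Hc'];
    first [left; lra | right; left; lra | right; right; left; lra | right; right; right; left; lra].
Qed.

Lemma SEMI : semialgebraic_fun hf.
Proof.
  exists Lsa. intros x1 x2 y. unfold Lsa. rewrite !Exists_app, !sets_spec.
  unfold eA, eBp, eBm, eC, sq2, Psub, Psc, PX, PY, PZ; simpl.
  unfold hf; simpl.
  destruct (Rle_dec (x1 + 2 * Rabs x2) 0) as [H1|H1];
  [|destruct (Rle_dec (Rabs x2) x1) as [H2|H2];
    [|destruct (Rle_dec 0 x2) as [H3|H3]]];
  elim_abs; split; intros H; (repeat destruct H as [H|H]);
  try (right; right; right; nra);
  try (left; nra);
  try (right; left; nra);
  try (right; right; left; nra);
  nra.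
Qed.

Theorem proposition4 :
  exists (h : R2 -> R) (grad : R2 -> R2) (rho : R),
    semialgebraic_fun h /\
    convex_fun h /\
    (forall x, has_gradient h x (grad x)) /\
    continuous2 grad /\
    (forall x y, norm (vsub (grad x) (grad y)) <= norm (vsub x y)) /\
    0 < rho < 1 /\
    (forall x, norm (vsub x (grad x)) <= rho * norm x) /\
    (forall r, r > 0 -> ~ strongly_convex_on h (in_ball origin r)) /\
    (exists M, clarke_jacobian grad origin M /\ singular M).
Proof.
  exists hf, Gf, (2/3).
  split; [exact SEMI|]. split; [exact CONV|]. split; [exact GRAD|].
  split; [exact CONT|]. split; [exact LIP|]. split; [lra|].
  split; [exact RHO|]. split; [exact NSC|]. exact CLARKE.
Qed.
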